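(* Let $n_1\geq n_2\geq 2$ be integers and let $E$ be the edge set of $\textsc{Grid}(n_1,n_2)$. Define $g:E\to[2n_1n_2-n_1-n_2]$ by $$g(\{(i,j),(i,j+1)\})=(i-1)(2n_2-1)+j\quad\text{for }(i,j)\in[n_1]\times[n_2-1],$$ $$g(\{(i,j),(i+1,j)\})=(n_1-i)(2n_2-1)+1-j\quad\text{for }(i,j)\in[n_1-1]\times[n_2].$$ Then $g$ is a $Q_2$-magic edge labeling of $\textsc{Grid}(n_1,n_2)$ with $Q_2$-magic sum $(2n_1-1)(2n_2-1)+1$.
   Context: $[k]=\{1,\ldots,k\}$. $\textsc{Grid}(n_1,n_2)$ is the graph with vertex set $[n_1]\times[n_2]$ in which $(i,j)$ and $(i',j')$ are adjacent iff $|i-i'|+|j-j'|=1$; it has $2n_1n_2-n_1-n_2$ edges. $Q_2$ is the 4-cycle $\textsc{Grid}(2,2)$. A bijection $g:E\to\{1,\ldots,|E|\}$ on the edge set of a graph $G=(V,E)$ is an $H$-magic edge labeling if there is a constant $c'$ (the $H$-magic sum) with $\sum_{e\in E(H')}g(e)=c'$ for every subgraph $H'\subseteq G$ isomorphic to $H$. *)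

(* Defs.v *)
From HB Require Import structures.
From mathcomp Require Import all_boot all_order all_algebra.
Set Implicit Arguments. Unset Strict Implicit. Unset Printing Implicit Defensive.

(* Vertices of Grid(n1,n2): 'I_n1 * 'I_n2; the 0-indexed vertex (a,b)
   stands for the paper's vertex (a+1, b+1). *)
Definition gvert (n1 n2 : nat) : finType := ('I_n1 * 'I_n2)%type.

Definition grid_adj (n1 n2 : nat) : rel (gvert n1 n2) :=
  fun u v => (`|Posz (val u.1) - Posz (val v.1)|%N + `|Posz (val u.2) - Posz (val v.2)|%N == 1)%N.

Definition grid_edges (n1 n2 : nat) : {set {set gvert n1 n2}} :=
  [set [set u; v] | u in [set: gvert n1 n2], v in [set: gvert n1 n2] & grid_adj u v].

(* General notion: Q2-magic edge labeling of a graph (V, adj) with edge set E.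
   g is a bijection E -> {1,..,|E|}, and every subgraph isomorphic to Q2 = C4
   (given by 4 distinct vertices a,b,c,d with edges ab, bc, cd, da) has edge-label
   sum c. *)
Definition Q2_magic (V : finType) (adj : rel V) (E : {set {set V}})
    (g : {set V} -> nat) (c : nat) : Prop :=
  [/\ {in E &, injective g},
      (forall e, e \in E -> 1 <= g e <= #|E|)%N,
      (forall k, 1 <= k <= #|E| -> exists2 e, e \in E & g e = k)%N &
      (forall a b c' d : V, uniq [:: a; b; c'; d] ->
         adj a b -> adj b c' -> adj c' d -> adj d a ->
         (g [set a; b] + g [set b; c'] + g [set c'; d] + g [set d; a] = c)%N)].

(* The labeling of the paper, with 1-indexed coordinates (i,j):
   horizontal edge {(i,j),(i,j+1)} gets (i-1)(2n2-1)+j,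
   vertical edge   {(i,j),(i+1,j)} gets (n1-i)(2n2-1)+1-j. *)
Definition lab_h (n1 n2 i j : nat) : nat := ((i - 1) * (2 * n2 - 1) + j)%N.
Definition lab_v (n1 n2 i j : nat) : nat := ((n1 - i) * (2 * n2 - 1) + 1 - j)%N.

Definition lab_pair (n1 n2 : nat) (u v : gvert n1 n2) : nat :=
  if (val v.1 == val u.1) && (val v.2 == (val u.2).+1) then
    lab_h n1 n2 (val u.1).+1 (val u.2).+1
  else if (val v.2 == val u.2) && (val v.1 == (val u.1).+1) then
    lab_v n1 n2 (val u.1).+1 (val u.2).+1
  else 0%N.

(* g on an edge e = {u,v}: exactly one ordered pair of its endpoints contributes. *)
Definition grid_lab (n1 n2 : nat) (e : {set gvert n1 n2}) : nat :=
  (\sum_(u in e) \sum_(v in e) lab_pair u v)%N.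

(* Main.v *)
Require Import Defs.
From HB Require Import structures.
From mathcomp Require Import all_boot all_order all_algebra zify.

Section G.
Variables n1 n2 : nat.
Hypothesis h2 : (2 <= n2)%N.
Hypothesis h12 : (n2 <= n1)%N.
Local Notation V := (gvert n1 n2).
Local Notation E := (grid_edges n1 n2).
Local Notation g := (@grid_lab n1 n2).
Definition Hl x y := lab_h n1 n2 x.+1 y.+1.
Definition Vl x y := lab_v n1 n2 x.+1 y.+1.

Lemma coord_eq (u v : V) : val u.1 = val v.1 -> val u.2 = val v.2 -> u = v.
Proof. case: u v => [u1 u2] [v1 v2] /= h1 h2'; congr pair; exact: val_inj. Qed.

Lemma neq_coord (u v : V) : u != v -> ~ (val u.1 = val v.1 /\ val u.2 = val v.2).
Proof. by move=> /eqP h [a b]; apply: h; apply: coord_eq. Qed.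

Lemma adj_dec (u v : V) : grid_adj u v ->
  [\/ val v.1 = val u.1 /\ val v.2 = (val u.2).+1,
      val v.1 = val u.1 /\ val u.2 = (val v.2).+1,
      val v.2 = val u.2 /\ val v.1 = (val u.1).+1 |
      val v.2 = val u.2 /\ val u.1 = (val v.1).+1].
Proof.
rewrite /grid_adj => /eqP h.
have : (val v.1 = val u.1 /\ (val v.2 = (val u.2).+1 \/ val u.2 = (val v.2).+1)) \/
       (val v.2 = val u.2 /\ (val v.1 = (val u.1).+1 \/ val u.1 = (val v.1).+1)) by lia.
case=> [[a [b|b]]|[a [b|b]]]; by [constructor 1|constructor 2|constructor 3|constructor 4].
Qed.

Lemma adj_neq (u v : V) : grid_adj u v -> u != v.
Proof. move=> h; apply/eqP => e; move: h; rewrite e /grid_adj. lia. Qed.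

Lemma lab_pair_nn (u : V) : lab_pair u u = 0.
Proof. rewrite /lab_pair; case: ifP; first lia. case: ifP => //; lia. Qed.

Lemma lab_set2 (u v : V) : u != v ->
  g [set u; v] = lab_pair u v + lab_pair v u.
Proof.
move=> uv.
have nu : u \notin [set v] by rewrite inE.
rewrite /grid_lab big_setU1 // big_set1 !big_setU1 // !big_set1 !lab_pair_nn.
by rewrite /= add0n !addn0.
Qed.

Inductive espec (u v : V) : nat -> Prop :=
| ER : val v.1 = val u.1 -> val v.2 = (val u.2).+1 -> espec u v (Hl (val u.1) (val u.2))
| EL : val v.1 = val u.1 -> val u.2 = (val v.2).+1 -> espec u v (Hl (val v.1) (val v.2))
| ED : val v.2 = val u.2 -> val v.1 = (val u.1).+1 -> espec u v (Vl (val u.1) (val u.2))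
| EU : val v.2 = val u.2 -> val u.1 = (val v.1).+1 -> espec u v (Vl (val v.1) (val v.2)).

Lemma especP (u v : V) : grid_adj u v -> espec u v (g [set u; v]).
Proof.
move=> h; rewrite lab_set2 ?(adj_neq u v) //.
case: (adj_dec u v h) => [[a b]|[a b]|[a b]|[a b]].
- suff -> : lab_pair u v + lab_pair v u = Hl (val u.1) (val u.2) by exact: ER.
  rewrite /lab_pair /Hl; repeat (case: ifP => ?); lia.
- suff -> : lab_pair u v + lab_pair v u = Hl (val v.1) (val v.2) by exact: EL.
  rewrite /lab_pair /Hl; repeat (case: ifP => ?); lia.
- suff -> : lab_pair u v + lab_pair v u = Vl (val u.1) (val u.2) by exact: ED.
  rewrite /lab_pair /Vl; repeat (case: ifP => ?); lia.
- suff -> : lab_pair u v + lab_pair v u = Vl (val v.1) (val v.2) by exact: EU.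
  rewrite /lab_pair /Vl; repeat (case: ifP => ?); lia.
Qed.

Definition Cm := ((2 * n1 - 1) * (2 * n2 - 1) + 1)%N.

Lemma sq i j : i.+1 < n1 -> j.+1 < n2 -> Hl i j + Hl i.+1 j + Vl i j + Vl i j.+1 = Cm.
Proof.
move=> hi hj. rewrite /Hl /Vl /Cm /lab_h /lab_v.
have [m ->] : exists m, n1 = i.+2 + m by exists (n1 - i.+2); lia.
have [K hK] : exists K, K = 2 * n2 - 1 by eauto.
rewrite -hK. have : n2 <= K by lia. move=> hn.
rewrite !subn1 /=. nia.
Qed.

Ltac trysq := first [ lia
  | match goal with
    | i : nat, j : nat |- _ => have := sq i j ltac:(lia) ltac:(lia); lia
    end ].

Lemma cyc (a b c d : V) : uniq [:: a; b; c; d] ->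
  grid_adj a b -> grid_adj b c -> grid_adj c d -> grid_adj d a ->
  g [set a; b] + g [set b; c] + g [set c; d] + g [set d; a] = Cm.
Proof.
move=> U hab hbc hcd hda.
have /neq_coord ac : a != c by move: U; apply: contraTneq => ->; rewrite /= !inE eqxx !orbT /= ?andbF.
have /neq_coord bd : b != d by move: U; apply: contraTneq => ->; rewrite /= !inE eqxx !orbT /= ?andbF.
have : val a.1 < n1 := ltn_ord a.1. have : val a.2 < n2 := ltn_ord a.2.
have : val b.1 < n1 := ltn_ord b.1. have : val b.2 < n2 := ltn_ord b.2.
have : val c.1 < n1 := ltn_ord c.1. have : val c.2 < n2 := ltn_ord c.2.
have : val d.1 < n1 := ltn_ord d.1. have : val d.2 < n2 := ltn_ord d.2.
move=> b1 b2 b3 b4 b5 b6 b7 b8.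
case: (especP a b hab) => e1 e2; case: (especP b c hbc) => e3 e4;
case: (especP c d hcd) => e5 e6; case: (especP d a hda) => e7 e8;
set (xa := val a.1) in *; set (ya := val a.2) in *; set (xb := val b.1) in *; set (yb := val b.2) in *;
set (xc := val c.1) in *; set (yc := val c.2) in *; set (xd := val d.1) in *; set (yd := val d.2) in *;
clearbody xa ya xb yb xc yc xd yd; subst; trysq.
Qed.

Lemma memE e : e \in E -> exists u v, grid_adj u v /\ e = [set u; v].
Proof. by case/imset2P => u v _; rewrite !inE /= => huv ->; exists u, v. Qed.

Lemma memE' (u v : V) : grid_adj u v -> [set u; v] \in E.
Proof. by move=> h; apply/imset2P; exists u v => //; rewrite !inE. Qed.

Inductive nspec (e : {set V}) : nat -> Prop :=
| NH (p q : V) : val q.1 = val p.1 -> val q.2 = (val p.2).+1 -> e = [set p; q] ->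
    nspec e (Hl (val p.1) (val p.2))
| NV (p q : V) : val q.2 = val p.2 -> val q.1 = (val p.1).+1 -> e = [set p; q] ->
    nspec e (Vl (val p.1) (val p.2)).

Lemma nspecP e : e \in E -> nspec e (g e).
Proof.
case/memE => u [v [h ->]]; case: (especP u v h) => e1 e2.
- exact: (@NH _ u v e1 e2 erefl).
- by apply: (@NH _ v u (esym e1) e2); rewrite setUC.
- exact: (@NV _ u v e1 e2 erefl).
- by apply: (@NV _ v u (esym e1) e2); rewrite setUC.
Qed.

Definition K := 2 * n2 - 1.
Definition N := (n1 - 1) * K + (n2 - 1).

Lemma Hl_code x y : y.+1 < n2 -> Hl x y = (x * K + y).+1.
Proof. move=> hy; rewrite /Hl /lab_h -/K. have -> : x.+1 - 1 = x by lia. lia. Qed.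

Lemma Vl_code x y : x.+1 < n1 -> y < n2 -> Vl x y = ((n1 - x.+2) * K + (K - 1 - y)).+1.
Proof.
move=> hx hy; rewrite /Vl /lab_v -/K.
have -> : n1 - x.+1 = (n1 - x.+2).+1 by lia.
rewrite mulSn. have : n2 <= K by rewrite /K; lia. move: (n1 - x.+2) => m. lia.
Qed.

Lemma decomp q r q' r' : q * K + r = q' * K + r' -> r < K -> r' < K -> q = q' /\ r = r'.
Proof.
move=> h hr hr'.
have K0 : 0 < K by rewrite /K; lia.
have hq : q = (q * K + r) %/ K by rewrite divnMDl // divn_small // addn0.
have hq' : q' = (q' * K + r') %/ K by rewrite divnMDl // divn_small // addn0.
split; first by rewrite hq hq' h.
have e : q = q' by rewrite hq hq' h.
move: h; rewrite e; lia.
Qed.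

Lemma ginj : {in E &, injective g}.
Proof.
move=> e1 e2 /nspecP s1 /nspecP s2; move: s1 s2.
have K2 : n2 <= K by rewrite /K; lia.
have KE : K = 2 * n2 - 1 by [].
case=> p q a1 a2 -> ; case=> p' q' a1' a2' -> ;
 have b1 : val p.1 < n1 := ltn_ord p.1; have b2 : val p.2 < n2 := ltn_ord p.2;
 have b3 : val q.1 < n1 := ltn_ord q.1; have b4 : val q.2 < n2 := ltn_ord q.2;
 have b5 : val p'.1 < n1 := ltn_ord p'.1; have b6 : val p'.2 < n2 := ltn_ord p'.2;
 have b7 : val q'.1 < n1 := ltn_ord q'.1; have b8 : val q'.2 < n2 := ltn_ord q'.2.
- rewrite !Hl_code; try lia. move/eq_add_S => h; have [c1 c2] := decomp _ _ _ _ h ltac:(lia) ltac:(lia).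
  have ep : p = p' by apply: coord_eq; lia.
  have eq : q = q' by apply: coord_eq; lia.
  by rewrite ep eq.
- rewrite Hl_code ?Vl_code; try lia. move/eq_add_S => h; have [c1 c2] := decomp _ _ _ _ h ltac:(lia) ltac:(lia); lia.
- rewrite Vl_code ?Hl_code; try lia. move/eq_add_S => h; have [c1 c2] := decomp _ _ _ _ h ltac:(lia) ltac:(lia); lia.
- rewrite !Vl_code; try lia. move/eq_add_S => h; have [c1 c2] := decomp _ _ _ _ h ltac:(lia) ltac:(lia).
  have ep : p = p' by apply: coord_eq; lia.
  have eq : q = q' by apply: coord_eq; lia.
  by rewrite ep eq.
Qed.

Lemma grange e : e \in E -> 1 <= g e <= N.
Proof.
move/nspecP; have K2 : n2 <= K by rewrite /K; lia.
have eN : (n1 - 1) * K = (n1 - 2) * K + K.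
  by rewrite addnC -mulSn; congr (_ * _); lia.
case=> p q a1 a2 _; have b1 : val p.1 < n1 := ltn_ord p.1; have b2 : val p.2 < n2 := ltn_ord p.2;
  have b3 : val q.1 < n1 := ltn_ord q.1; have b4 : val q.2 < n2 := ltn_ord q.2.
- rewrite Hl_code; last lia.
  have : val p.1 * K <= (n1 - 1) * K by apply: leq_mul => //; lia.
  rewrite /N; move: (val p.1 * K) ((n1 - 1) * K) => A B; lia.
- rewrite Vl_code; try lia.
  have : (n1 - (val p.1).+2) * K <= (n1 - 2) * K by apply: leq_mul => //; lia.
  rewrite /N; move: eN; move: ((n1 - (val p.1).+2) * K) ((n1 - 1) * K) ((n1 - 2) * K) => A B C; lia.
Qed.

Lemma gsurj k : 1 <= k <= N -> exists2 e, e \in E & g e = k.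
Proof.
move=> hk.
have K2 : n2 <= K by rewrite /K; lia.
have KE : K = 2 * n2 - 1 by [].
have K0 : 0 < K by lia.
set m := k.-1.
have hm : m = m %/ K * K + m %% K := divn_eq m K.
have hr : m %% K < K := ltn_pmod m K0.
set q := m %/ K in hm *; set r := m %% K in hm hr *.
have hmN : m < N by rewrite /m; lia.
have eN : (n1 - 1) * K = (n1 - 2) * K + K.
  by rewrite addnC -mulSn; congr (_ * _); lia.
case: (ltnP r (n2 - 1)) => hr2.
- have hq : q < n1.
    have e1 : (n1 - 1) * K + K = n1 * K by rewrite addnC -mulSn; congr (_ * _); lia.
    have : q * K < n1 * K.
      move: hmN hm e1; rewrite /N; move: (q * K) ((n1 - 1) * K) (n1 * K) => A B C; lia.
    by rewrite ltn_pmul2r.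
  have hy1 : r < n2 by lia.
  have hy2 : r.+1 < n2 by lia.
  pose p : V := (Ordinal hq, Ordinal hy1).
  pose p' : V := (Ordinal hq, Ordinal hy2).
  have hadj : grid_adj p p' by rewrite /grid_adj /=; lia.
  exists [set p; p']; first exact: memE'.
  case: (especP p p' hadj) => /= e1 e2; try lia.
  rewrite Hl_code //; lia.
- have hq : q < n1 - 1.
    have : q * K < (n1 - 1) * K.
      move: hmN hm; rewrite /N; move: (q * K) ((n1 - 1) * K) => A B; lia.
    by rewrite ltn_pmul2r.
  have hx1 : n1 - 2 - q < n1 by lia.
  have hx2 : (n1 - 2 - q).+1 < n1 by lia.
  have hy : K - 1 - r < n2 by lia.
  pose p : V := (Ordinal hx1, Ordinal hy).
  pose p' : V := (Ordinal hx2, Ordinal hy).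
  have hadj : grid_adj p p' by rewrite /grid_adj /=; lia.
  exists [set p; p']; first exact: memE'.
  case: (especP p p' hadj) => /= e1 e2; try lia.
  rewrite Vl_code //=.
  have -> : n1 - (n1 - 2 - q).+2 = q by lia.
  lia.
Qed.

Lemma cardE : #|E| = N.
Proof.
set s := [seq g e | e in E].
have us : uniq s.
  rewrite map_inj_in_uniq ?enum_uniq //.
  by move=> x y; rewrite !mem_enum; apply: ginj.
have ps : perm_eq s (iota 1 N).
  apply: uniq_perm => //; first exact: iota_uniq.
  move=> k; rewrite mem_iota; apply/imageP/idP.
  - by case=> e he ->; have := grange e he; lia.
  - move=> hk; have [|e he <-] := gsurj k; first lia.
    by exists e.
by rewrite -(size_image g E) -/s (perm_size ps) size_iota.
Qed.
End G.

Theorem lemma4 (n1 n2 : nat) (h2 : (2 <= n2)%N) (h12 : (n2 <= n1)%N) :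
  Q2_magic (@grid_adj n1 n2) (grid_edges n1 n2) (@grid_lab n1 n2)
    ((2 * n1 - 1) * (2 * n2 - 1) + 1)%N.
Proof.
split.
- exact: ginj.
- by move=> e he; rewrite cardE //; apply: grange.
- by move=> k; rewrite cardE // => hk; apply: gsurj.
- by move=> a b c d U h1 h2' h3 h4; apply: cyc.
Qed.
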